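(* Let $\Omega_0=(-\infty,-2)^3\subset\mathbb{R}^3$ and $\Omega=\Gamma\cdot\Omega_0$. If $\gamma\in\Gamma_{(2)}$ and $\gamma\Omega_0\cap\Omega_0\neq\emptyset$, then $\gamma$ is the identity. Consequently $\Omega$ is the disjoint union $\coprod_{\gamma\in\Gamma_{(2)}}\gamma\Omega_0$.
   Context: $\kappa(x,y,z)=x^2+y^2+z^2-xyz-2$. $\Gamma$ denotes the group of polynomial automorphisms of $\mathbb{C}^3$ generated by: all permutations of the coordinates $x,y,z$; the three sign changes $(x,y,z)\mapsto(x,-y,-z)$, $(x,y,z)\mapsto(-x,y,-z)$, $(x,y,z)\mapsto(-x,-y,z)$; and the quadratic reflection $(x,y,z)\mapsto(yz-x,y,z)$. Every element of $\Gamma$ preserves $\kappa$ and maps $\mathbb{R}^3$ to itself. $\Gamma_{(2)}$ denotes the subgroup of $\Gamma$ generated by the three sign changes and the three quadratic reflections $Q_x(x,y,z)=(yz-x,y,z)$, $Q_y(x,y,z)=(x,xz-y,z)$, $Q_z(x,y,z)=(x,y,xy-z)$; it is the kernel of the natural surjection $\Gamma\to\mathfrak{S}_3$ and has index $6$. *)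

(* Defs.v *)
From Stdlib Require Import Reals.
Open Scope R_scope.

Definition pt : Type := (R * R * R)%type.

Definition kappa (p : pt) : R :=
  let '(x, y, z) := p in x*x + y*y + z*z - x*y*z - 2.

Definition perm_xy (p : pt) : pt := let '(x, y, z) := p in (y, x, z).
Definition perm_yz (p : pt) : pt := let '(x, y, z) := p in (x, z, y).
Definition perm_xz (p : pt) : pt := let '(x, y, z) := p in (z, y, x).
Definition perm_cyc1 (p : pt) : pt := let '(x, y, z) := p in (y, z, x).
Definition perm_cyc2 (p : pt) : pt := let '(x, y, z) := p in (z, x, y).
Definition sign_x (p : pt) : pt := let '(x, y, z) := p in (x, -y, -z).
Definition sign_y (p : pt) : pt := let '(x, y, z) := p in (-x, y, -z).
Definition sign_z (p : pt) : pt := let '(x, y, z) := p in (-x, -y, z).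
Definition Qx (p : pt) : pt := let '(x, y, z) := p in (y*z - x, y, z).
Definition Qy (p : pt) : pt := let '(x, y, z) := p in (x, x*z - y, z).
Definition Qz (p : pt) : pt := let '(x, y, z) := p in (x, y, x*y - z).

Inductive gen2 : (pt -> pt) -> Prop :=
| g2_sx : gen2 sign_x | g2_sy : gen2 sign_y | g2_sz : gen2 sign_z
| g2_Qx : gen2 Qx | g2_Qy : gen2 Qy | g2_Qz : gen2 Qz.

(* Generating set of Gamma: all permutations, sign changes, and Qx
   (Qy, Qz are included too; they are conjugates of Qx by permutations). *)
Inductive genG : (pt -> pt) -> Prop :=
| gG_2 g : gen2 g -> genG g
| gG_xy : genG perm_xy | gG_yz : genG perm_yz | gG_xz : genG perm_xz
| gG_c1 : genG perm_cyc1 | gG_c2 : genG perm_cyc2.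

(* The group generated by a set of involutive generators (all generators
   above are involutions or permutations of finite order, so the generated
   group is the set of finite compositions of generators). *)
Inductive words (gen : (pt -> pt) -> Prop) : (pt -> pt) -> Prop :=
| w_id : words gen (fun p => p)
| w_comp g f : gen g -> words gen f -> words gen (fun p => g (f p)).

Definition Gamma : (pt -> pt) -> Prop := words genG.
Definition Gamma2 : (pt -> pt) -> Prop := words gen2.

Definition Omega0 (p : pt) : Prop :=
  let '(x, y, z) := p in x < -2 /\ y < -2 /\ z < -2.

Definition img (g : pt -> pt) (A : pt -> Prop) (p : pt) : Prop :=
  exists q, A q /\ p = g q.

Definition Omega (p : pt) : Prop := exists g, Gamma g /\ img g Omega0 p.

(* Main.v *)
Require Import Defs.
From Stdlib Require Import Reals Lra Psatz List.
Open Scope R_scope.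

Lemma pair_eq (a b c d e f : R) : a = d -> b = e -> c = f -> (a, b, c) = (d, e, f).
Proof. intros; subst; reflexivity. Qed.

Inductive ix := IX | IY | IZ.
Definition Qi (i : ix) : pt -> pt := match i with IX => Qx | IY => Qy | IZ => Qz end.
Definition apply_l (l : list ix) (p : pt) : pt := fold_right (fun i t => Qi i t) p l.
Fixpoint red (l : list ix) : Prop :=
  match l with
  | i :: ((j :: _) as t) => i <> j /\ red t
  | _ => True
  end.

Inductive sx := S0 | SX | SY | SZ.
Definition sg (s : sx) : pt -> pt :=
  match s with S0 => fun p => p | SX => sign_x | SY => sign_y | SZ => sign_z end.
Definition smul (a b : sx) : sx :=
  match a, b with
  | S0, b => b | a, S0 => a
  | SX, SX => S0 | SY, SY => S0 | SZ, SZ => S0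
  | SX, SY => SZ | SY, SX => SZ
  | SX, SZ => SY | SZ, SX => SY
  | SY, SZ => SX | SZ, SY => SX
  end.

Lemma smul_ok a b t : sg a (sg b t) = sg (smul a b) t.
Proof. destruct a, b, t as [[x y] z]; simpl; apply pair_eq; ring. Qed.

Lemma Qcomm i s t : Qi i (sg s t) = sg s (Qi i t).
Proof. destruct i, s, t as [[x y] z]; simpl; apply pair_eq; ring. Qed.

Lemma Qinv i t : Qi i (Qi i t) = t.
Proof. destruct i, t as [[x y] z]; simpl; apply pair_eq; ring. Qed.

Lemma ix_dec (i j : ix) : {i = j} + {i <> j}.
Proof. decide equality. Qed.

Lemma red_tl i l : red (i :: l) -> red l.
Proof. destruct l; simpl; tauto. Qed.

Lemma push i l : red l -> exists l', red l' /\ forall t, Qi i (apply_l l t) = apply_l l' t.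
Proof.
  intros Hr. destruct l as [|j l].
  - exists (i :: nil). simpl. split; auto.
  - destruct (ix_dec i j) as [<-|Hn].
    + exists l. split. eapply red_tl; eauto. intros t. simpl. apply Qinv.
    + exists (i :: j :: l). split. simpl. split; auto. intros; reflexivity.
Qed.

Lemma NF g : Gamma2 g -> exists s l, red l /\ forall p, g p = sg s (apply_l l p).
Proof.
  unfold Gamma2. intros H. induction H as [|g f Hg Hf IH].
  - exists S0, nil. simpl. split; auto.
  - destruct IH as (s & l & Hr & He).
    destruct Hg.
    + exists (smul SX s), l. split; auto. intros p. rewrite He. exact (smul_ok SX s _).
    + exists (smul SY s), l. split; auto. intros p. rewrite He. exact (smul_ok SY s _).
    + exists (smul SZ s), l. split; auto. intros p. rewrite He. exact (smul_ok SZ s _).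
    + destruct (push IX l Hr) as (l' & Hr' & HQ). exists s, l'. split; auto.
      intros p. rewrite He. rewrite <- HQ. exact (Qcomm IX s _).
    + destruct (push IY l Hr) as (l' & Hr' & HQ). exists s, l'. split; auto.
      intros p. rewrite He. rewrite <- HQ. exact (Qcomm IY s _).
    + destruct (push IZ l Hr) as (l' & Hr' & HQ). exists s, l'. split; auto.
      intros p. rewrite He. rewrite <- HQ. exact (Qcomm IZ s _).
Qed.

Lemma sgn2 a : a * a > 4 -> a > 2 \/ a < -2.
Proof. intros. destruct (Rle_lt_dec a 0); [right|left]; nra. Qed.

Lemma core_pos A B C : A > 2 -> B > 2 -> C > 2 -> B > A -> B*C - A > B /\ B*C - A > C.
Proof. intros. split; nra. Qed.

Ltac core_case a b c A B C :=
  destruct (core_pos A B C) as [D1 D2]; try lra; [try nra|];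
  replace ((b*c - a)*b*c) with ((B*C-A)*(B*C)) by ring;
  replace ((b*c - a)*(b*c - a)) with ((B*C-A)*(B*C-A)) by ring;
  replace (b*b) with (B*B) by ring; replace (c*c) with (C*C) by ring;
  assert (B*C > 0) by nra;
  repeat split; nra.

Lemma core a b c a' : a' = b*c - a -> a*b*c > 0 -> a*a > 4 -> b*b > 4 -> c*c > 4 ->
  b*b > a*a -> a'*b*c > 0 /\ a'*a' > b*b /\ a'*a' > c*c.
Proof.
  intros E H0 Ha Hb Hc Hab; subst a'.
  destruct (sgn2 a Ha), (sgn2 b Hb), (sgn2 c Hc);
  try (exfalso; assert (a*b > 4) by nra; nra);
  try (exfalso; assert (a*b < -4) by nra; nra).
  - core_case a b c a b c.
  - core_case a b c a (-b) (-c).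
  - core_case a b c (-a) b (-c).
  - core_case a b c (-a) (-b) c.
Qed.

Definition Inv (i : ix) (p : pt) : Prop :=
  let '(x, y, z) := p in x*y*z > 0 /\ x*x > 4 /\ y*y > 4 /\ z*z > 4 /\
  match i with
  | IX => x*x > y*y /\ x*x > z*z
  | IY => y*y > x*x /\ y*y > z*z
  | IZ => z*z > x*x /\ z*z > y*y
  end.

Lemma step i j p : Inv i p -> j <> i -> Inv j (Qi j p).
Proof.
  destruct p as [[x y] z]; unfold Inv; simpl.
  intros (H0 & Hx & Hy & Hz & Hm) Hn.
  destruct i, j; try congruence; simpl; destruct Hm as [Hm1 Hm2].
  - destruct (core y x z (x*z - y)) as (A & B & C); try lra.
  - destruct (core z x y (x*y - z)) as (A & B & C); try lra.
  - destruct (core x y z (y*z - x)) as (A & B & C); try lra.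
  - destruct (core z y x (x*y - z)) as (A & B & C); try lra.
  - destruct (core x z y (y*z - x)) as (A & B & C); try lra.
  - destruct (core y z x (x*z - y)) as (A & B & C); try lra.
Qed.

Lemma base i q : Omega0 q -> Inv i (Qi i q).
Proof.
  destruct q as [[x y] z]; unfold Omega0, Inv; simpl. intros (Hx & Hy & Hz).
  assert (x*y > 4) by nra. assert (y*z > 4) by nra. assert (x*z > 4) by nra.
  assert (y*z > -2*y /\ y*z > -2*z /\ x*z > -2*x /\ x*z > -2*z /\ x*y > -2*x /\ x*y > -2*y) by (repeat split; nra).
  destruct i; simpl.
  - assert (y*z - x > 6) by lra. replace ((y*z-x)*y*z) with ((y*z-x)*(y*z)) by ring.
    repeat split; nra.
  - assert (x*z - y > 6) by lra. replace (x*(x*z-y)*z) with ((x*z-y)*(x*z)) by ring.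
    repeat split; nra.
  - assert (x*y - z > 6) by lra. replace (x*y*(x*y-z)) with ((x*y-z)*(x*y)) by ring.
    repeat split; nra.
Qed.

Lemma redInv l q : Omega0 q -> red l -> forall i l', l = i :: l' -> Inv i (apply_l l q).
Proof.
  intros Hq. induction l as [|j l IH]; intros Hr i l' E; [discriminate|].
  injection E as <- <-.
  destruct l as [|k l].
  - simpl. apply base; auto.
  - destruct Hr as [Hn Hr]. change (Inv j (Qi j (apply_l (k :: l) q))).
    apply step with k; auto. eapply IH; eauto.
Qed.

Lemma neg3 x y z : x < -2 -> y < -2 -> z < -2 -> x*y*z < 0.
Proof. intros. assert (x*y > 4) by nra. nra. Qed.

Lemma part1 : forall g : pt -> pt, Gamma2 g ->
     (exists p, img g Omega0 p /\ Omega0 p) -> forall p, g p = p.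
Proof.
  intros g Hg [p [[q [Hq Hpq]] Hp]] p0.
  destruct (NF g Hg) as (s & l & Hr & He).
  rewrite Hpq, He in Hp.
  destruct l as [|i l'].
  - simpl in Hp. destruct s.
    + rewrite He. reflexivity.
    + exfalso; destruct q as [[x y] z]; simpl in Hp, Hq; lra.
    + exfalso; destruct q as [[x y] z]; simpl in Hp, Hq; lra.
    + exfalso; destruct q as [[x y] z]; simpl in Hp, Hq; lra.
  - exfalso. pose proof (redInv _ q Hq Hr i l' eq_refl) as HI.
    remember (apply_l (i :: l') q) as t. clear Heqt.
    destruct t as [[x y] z]. unfold Inv in HI. destruct HI as [H0 _].
    destruct s; simpl in Hp; destruct Hp as (A & B & C).
    + pose proof (neg3 _ _ _ A B C); lra.
    + pose proof (neg3 _ _ _ A B C); nra.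
    + pose proof (neg3 _ _ _ A B C); nra.
    + pose proof (neg3 _ _ _ A B C); nra.
Qed.

Inductive pgen : (pt -> pt) -> Prop :=
| pg_xy : pgen perm_xy | pg_yz : pgen perm_yz | pg_xz : pgen perm_xz
| pg_c1 : pgen perm_cyc1 | pg_c2 : pgen perm_cyc2.

Ltac try_gen g := exists g; split; [constructor | intros [[x y] z]; simpl; apply pair_eq; ring].

Lemma conj_gen s g : pgen s -> gen2 g -> exists g', gen2 g' /\ forall p, s (g p) = g' (s p).
Proof.
  intros Hs Hg; destruct Hs; destruct Hg;
  first [ try_gen sign_x | try_gen sign_y | try_gen sign_z
        | try_gen Qx | try_gen Qy | try_gen Qz ].
Qed.

Lemma conj_w s h : pgen s -> Gamma2 h -> exists h', Gamma2 h' /\ forall p, s (h p) = h' (s p).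
Proof.
  intros Hs H. unfold Gamma2 in *. induction H as [|g f Hg Hf IH].
  - exists (fun p => p). split; [constructor | reflexivity].
  - destruct IH as (f' & Hf' & Ef). destruct (conj_gen s g Hs Hg) as (g' & Hg' & Eg).
    exists (fun p => g' (f' p)). split. constructor; auto.
    intros p. rewrite Eg, Ef. reflexivity.
Qed.

Lemma perm_Om s q : words pgen s -> Omega0 q -> Omega0 (s q).
Proof.
  intros H Hq. induction H as [|g f Hg Hf IH]; auto.
  destruct Hg; destruct (f q) as [[x y] z]; unfold Omega0 in *; simpl in *; tauto.
Qed.

Ltac dc sg := lazymatch goal with
  | Hh : Gamma2 ?h, E : forall p, ?f p = ?h (?s p) |- _ =>
      destruct (conj_w sg h ltac:(constructor) Hh) as (h' & Hh' & Ec);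
      exists h', (fun p => sg (s p)); repeat split; auto;
      [ constructor; [constructor | auto] | intros p; simpl; rewrite E, Ec; reflexivity ] end.

Lemma decomp g : Gamma g -> exists h s, Gamma2 h /\ words pgen s /\ forall p, g p = h (s p).
Proof.
  unfold Gamma. intros H. induction H as [|g f Hg Hf IH].
  - exists (fun p => p), (fun p => p). repeat split; try constructor.
  - destruct IH as (h & s & Hh & Hs & E).
    destruct Hg as [g Hg| | | | |].
    1: { exists (fun p => g (h p)), s. repeat split; auto. constructor; auto.
      intros p; rewrite E; reflexivity. }
    all: [> dc perm_xy | dc perm_yz | dc perm_xz | dc perm_cyc1 | dc perm_cyc2 ].
Qed.

Lemma G2G g : Gamma2 g -> Gamma g.
Proof.
  unfold Gamma2, Gamma. intros H; induction H; constructor; auto. constructor; auto.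
Qed.

Lemma invol g : gen2 g -> forall p, g (g p) = p.
Proof. intros Hg [[x y] z]; destruct Hg; simpl; apply pair_eq; ring. Qed.

Lemma w_cat a b : Gamma2 a -> Gamma2 b -> Gamma2 (fun p => a (b p)).
Proof.
  unfold Gamma2. intros Ha Hb. induction Ha as [|g f Hg Hf IH]; auto.
  constructor; auto.
Qed.

Lemma inv_w g : Gamma2 g -> exists gi, Gamma2 gi /\ (forall p, gi (g p) = p) /\ (forall p, g (gi p) = p).
Proof.
  intros H. induction H as [|g f Hg Hf IH].
  - exists (fun p => p). repeat split; constructor.
  - destruct IH as (fi & Hfi & E1 & E2).
    exists (fun p => fi (g p)). repeat split.
    + apply w_cat; auto. constructor; auto. constructor.
    + intros p. rewrite invol; auto.
    + intros p. rewrite E2. apply invol; auto.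
Qed.

Theorem mainTheorem8 :
  (forall g : pt -> pt, Gamma2 g ->
     (exists p, img g Omega0 p /\ Omega0 p) -> forall p, g p = p)
  /\
  (forall p, Omega p <-> exists g, Gamma2 g /\ img g Omega0 p)
  /\
  (forall g1 g2 : pt -> pt, Gamma2 g1 -> Gamma2 g2 ->
     (exists p, img g1 Omega0 p /\ img g2 Omega0 p) ->
     forall p, g1 p = g2 p).
Proof.
  split; [exact part1|split].
  - intros p. split.
    + intros (g & Hg & q & Hq & Ep). destruct (decomp g Hg) as (h & s & Hh & Hs & E).
      exists h. split; auto. exists (s q). split. apply perm_Om; auto.
      rewrite Ep, E; reflexivity.
    + intros (g & Hg & Hi). exists g. split; auto. apply G2G; auto.
  - intros g1 g2 H1 H2 (p & (q1 & Hq1 & E1) & (q2 & Hq2 & E2)) p0.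
    destruct (inv_w g2 H2) as (gi & Hgi & I1 & I2).
    assert (Hid : forall t, gi (g1 t) = t).
    { apply part1. apply w_cat; auto. exists q2. split; auto.
      exists q1. split; auto. rewrite <- E1, E2, I1. reflexivity. }
    rewrite <- (I2 (g1 p0)), Hid. reflexivity.
Qed.
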